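(* For every $\varphi\in\mathcal{L}_{CoRGAL}$ and every maximal consistent theory $x$: $\varphi\in x$ if and only if $(M^C,x)\models\varphi$.
   Context: Fix a finite set $A$ of agents and a countable set $P$ of propositional variables. The language $\mathcal{L}_{CoRGAL}$ is given by $\varphi ::= p \mid \neg\varphi \mid (\varphi\wedge\varphi) \mid K_a\varphi \mid [\varphi]\varphi \mid [G,\varphi]\varphi \mid [\langle G\rangle]\varphi$ with $p\in P$, $a\in A$, $G\subseteq A$. $\mathcal{L}_{EL}$ is the fragment built only from $p,\neg,\wedge,K_a$. Duals: $\langle\psi\rangle\varphi:=\neg[\psi]\neg\varphi$, $\langle G,\psi\rangle\varphi:=\neg[G,\psi]\neg\varphi$. $\mathcal{L}^G_{EL}$ is the set of formulas $\bigwedge_{i\in G}K_i\varphi_i$ with $\varphi_i\in\mathcal{L}_{EL}$; $\psi_G,\chi_G$ range over it. Semantics over epistemic models $M=(W,\sim,V)$ ($W\ne\emptyset$, $\sim_a$ equivalence relations, $V:P\to\mathcal{P}(W)$; $M^\varphi$ the restriction to $\{v:(M,v)\models\varphi\}$): standard for $p,\neg,\wedge,K_a$; $[\varphi]\psi$ holds at $w$ iff $(M,w)\models\varphi$ implies $(M^\varphi,w)\models\psi$; $[G,\chi]\varphi$ holds iff $\chi$ holds and $[\psi_G\wedge\chi]\varphi$ holds for all $\psi_G$; $[\langle G\rangle]\varphi$ holds iff for every $\psi_G$ there is $\chi_{A\setminus G}$ with $\psi_G\to\langle\psi_G\wedge\chi_{A\setminus G}\rangle\varphi$ holding. Necessity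 forms: $\eta ::= \sharp \mid \varphi\to\eta(\sharp)\mid K_a\eta(\sharp)\mid[\varphi]\eta(\sharp)$, $\eta(\varphi)$ replaces the unique $\sharp$ by $\varphi$. $\mathbf{CoRGAL}$ is the smallest set containing all instances of (A0) propositional tautologies; (A1) $K_a(\varphi\to\psi)\to(K_a\varphi\to K_a\psi)$; (A2) $K_a\varphi\to\varphi$; (A3) $K_a\varphi\to K_aK_a\varphi$; (A4) $\neg K_a\varphi\to K_a\neg K_a\varphi$; (A5) $[\varphi]p\leftrightarrow(\varphi\to p)$; (A6) $[\varphi]\neg\psi\leftrightarrow(\varphi\to\neg[\varphi]\psi)$; (A7) $[\varphi](\psi\wedge\chi)\leftrightarrow([\varphi]\psi\wedge[\varphi]\chi)$; (A8) $[\varphi]K_a\psi\leftrightarrow(\varphi\to K_a[\varphi]\psi)$; (A9) $[\varphi][\psi]\chi\leftrightarrow[\varphi\wedge[\varphi]\psi]\chi$; (A10) $[G,\chi]\varphi\to\chi\wedge[\psi_G\wedge\chi]\varphi$; (A11) $[\langle G\rangle]\varphi\to\langle A\setminus G,\psi_G\rangle\varphi$; closed under (R0) modus ponens; (R1) $\varphi/K_a\varphi$; (R2) $\varphi/[\psi]\varphi$; (R3) $\varphi/[G,\chi]\varphi$; (R4) $\varphi/[\langle G\rangle]\varphi$; (R5) from $\eta(\chi\wedge[\psi_G\wedge\chi]\varphi)$ for all $\psi_G$ infer $\eta([G,\chi]\varphi)$; (R6) from $\eta(\langle A\setminus G,\psi_G\rangle\varphi)$ for all $\psi_G$ infer $\eta([\langle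 G\rangle]\varphi)$. A theory is a set of formulas containing $\mathbf{CoRGAL}$ and closed under (R0), (R5), (R6); it is consistent iff $\bot\notin x$ and maximal iff for each $\varphi$, $\varphi\in x$ or $\neg\varphi\in x$. The canonical model $M^C=(W^C,\sim^C,V^C)$ has $W^C$ the set of maximal consistent theories, $x\sim^C_a y$ iff $\{\varphi:K_a\varphi\in x\}=\{\varphi:K_a\varphi\in y\}$, and $x\in V^C(p)$ iff $p\in x$. *)

(* Defs.v *)
From mathcomp Require Import all_boot.
Set Implicit Arguments. Unset Strict Implicit. Unset Printing Implicit Defensive.

Section CoRGAL.
Variables (A : finType) (P : countType).
(* p0 : a fixed propositional variable, only used to write the constant
   formula T := ~(p0 /\ ~p0) (the empty conjunction). *)
Variable p0 : P.

Inductive form : Type :=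
| Var : P -> form
| Neg : form -> form
| And : form -> form -> form
| Kn : A -> form -> form
| Ann : form -> form -> form
| GAnn : {set A} -> form -> form -> form
| CoalAnn : {set A} -> form -> form.

Definition Imp (f g : form) : form := Neg (And f (Neg g)).
Definition Iff (f g : form) : form := And (Imp f g) (Imp g f).
Definition Top : form := Neg (And (Var p0) (Neg (Var p0))).
Definition Bot : form := Neg Top.
Definition DAnn (f g : form) : form := Neg (Ann f (Neg g)).
Definition DGAnn (G : {set A}) (f g : form) : form := Neg (GAnn G f (Neg g)).

Fixpoint is_el (f : form) : bool :=
  match f with
  | Var _ => true
  | Neg g => is_el g
  | And g h => is_el g && is_el h
  | Kn _ g => is_el g
  | _ => false
  end.

Fixpoint bigAnd (s : seq form) : form :=
  match s with
  | [::] => Top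
  | [:: x] => x
  | x :: s' => And x (bigAnd s')
  end.

Definition conjG (G : {set A}) (f : A -> form) : form :=
  bigAnd [seq Kn i (f i) | i <- enum G].

Definition elFam (G : {set A}) (f : A -> form) : Prop :=
  forall i, i \in G -> is_el (f i).

Record model : Type := Model {
  W : Type;
  Rel : A -> W -> W -> Prop;
  Val : P -> W -> Prop
}.

Definition epistemic (M : model) : Prop :=
  inhabited (W M) /\
  forall a, (forall w : W M, Rel a w w) /\ (forall w v : W M, Rel a w v -> Rel a v w) /\
            (forall w v u : W M, Rel a w v -> Rel a v u -> Rel a w u).

(* Truth in the restriction of M to the set of worlds D (D models the
   successive model restrictions M^phi produced by announcements). *)

(* Satisfaction on the L_EL fragment (used to evaluate psi_G in L^G_EL). *)
Fixpoint satEL (M : model) (D : W M -> Prop) (w : W M) (f : form) : Prop :=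
  match f with
  | Var p => Val p w
  | Neg g => ~ satEL D w g
  | And g h => satEL D w g /\ satEL D w h
  | Kn a g => forall v, D v -> Rel a w v -> satEL D v g
  | _ => False
  end.

Fixpoint sat (M : model) (D : W M -> Prop) (w : W M) (f : form) : Prop :=
  match f with
  | Var p => Val p w
  | Neg g => ~ sat D w g
  | And g h => sat D w g /\ sat D w h
  | Kn a g => forall v, D v -> Rel a w v -> sat D v g
  | Ann g h => sat D w g -> sat (fun v => D v /\ sat D v g) w h
  | GAnn G chi g =>
      sat D w chi /\
      forall psi, elFam G psi ->
        (satEL D w (conjG G psi) /\ sat D w chi) ->
        sat (fun v => D v /\ (satEL D v (conjG G psi) /\ sat D v chi)) w g
  | CoalAnn G g =>
      forall psi, elFam G psi -> exists chi, elFam (~: G) chi /\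
        (satEL D w (conjG G psi) ->
          (satEL D w (conjG G psi) /\ satEL D w (conjG (~: G) chi)) /\
          sat (fun v => D v /\ (satEL D v (conjG G psi) /\
                                satEL D v (conjG (~: G) chi))) w g)
  end.

Definition models (M : model) (w : W M) (f : form) : Prop :=
  sat (fun _ => True) w f.

Lemma satEL_sat (M : model) (D : W M -> Prop) (f : form) :
  is_el f -> forall w, satEL D w f <-> sat D w f.
Proof.
elim: f D => //=.
- by move=> g IH D Hg w; split=> H H'; apply: H; apply/(IH D Hg w).
- move=> g IHg h IHh D /andP[Hg Hh] w.
  by split=> -[H1 H2]; split; [apply/IHg|apply/IHh|apply/IHg|apply/IHh].
- move=> a g IH D Hg w; split=> H v Dv Rv; apply/(IH D Hg v); exact: H.
Qed.

(* Instances of propositional tautologies: true under every boolean valuation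
   of the maximal non-(Neg/And) subformulas. *)
Fixpoint pval (v : form -> bool) (f : form) : bool :=
  match f with
  | Neg g => ~~ pval v g
  | And g h => pval v g && pval v h
  | _ => v f
  end.
Definition ptaut (f : form) : Prop := forall v, pval v f = true.

Inductive nform : Type :=
| NHole : nform
| NImp : form -> nform -> nform
| NK : A -> nform -> nform
| NAnn : form -> nform -> nform.

Fixpoint nfill (e : nform) (f : form) : form :=
  match e with
  | NHole => f
  | NImp g e' => Imp g (nfill e' f)
  | NK a e' => Kn a (nfill e' f)
  | NAnn g e' => Ann g (nfill e' f)
  end.

Inductive CoRGAL : form -> Prop :=
| A0 f : ptaut f -> CoRGAL f
| A1 a f g : CoRGAL (Imp (Kn a (Imp f g)) (Imp (Kn a f) (Kn a g)))
| A2 a f : CoRGAL (Imp (Kn a f) f)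
| A3 a f : CoRGAL (Imp (Kn a f) (Kn a (Kn a f)))
| A4 a f : CoRGAL (Imp (Neg (Kn a f)) (Kn a (Neg (Kn a f))))
| A5 f p : CoRGAL (Iff (Ann f (Var p)) (Imp f (Var p)))
| A6 f g : CoRGAL (Iff (Ann f (Neg g)) (Imp f (Neg (Ann f g))))
| A7 f g h : CoRGAL (Iff (Ann f (And g h)) (And (Ann f g) (Ann f h)))
| A8 f a g : CoRGAL (Iff (Ann f (Kn a g)) (Imp f (Kn a (Ann f g))))
| A9 f g h : CoRGAL (Iff (Ann f (Ann g h)) (Ann (And f (Ann f g)) h))
| A10 G chi f psi : elFam G psi ->
    CoRGAL (Imp (GAnn G chi f) (And chi (Ann (And (conjG G psi) chi) f)))
| A11 G f psi : elFam G psi ->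
    CoRGAL (Imp (CoalAnn G f) (DGAnn (~: G) (conjG G psi) f))
| R0 f g : CoRGAL (Imp f g) -> CoRGAL f -> CoRGAL g
| R1 a f : CoRGAL f -> CoRGAL (Kn a f)
| R2 g f : CoRGAL f -> CoRGAL (Ann g f)
| R3 G chi f : CoRGAL f -> CoRGAL (GAnn G chi f)
| R4 G f : CoRGAL f -> CoRGAL (CoalAnn G f)
| R5 e G chi f :
    (forall psi, elFam G psi ->
       CoRGAL (nfill e (And chi (Ann (And (conjG G psi) chi) f)))) ->
    CoRGAL (nfill e (GAnn G chi f))
| R6 e G f :
    (forall psi, elFam G psi -> CoRGAL (nfill e (DGAnn (~: G) (conjG G psi) f))) ->
    CoRGAL (nfill e (CoalAnn G f)).

Definition theory (x : form -> Prop) : Prop :=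
  (forall f, CoRGAL f -> x f) /\
  (forall f g, x (Imp f g) -> x f -> x g) /\
  (forall e G chi f,
     (forall psi, elFam G psi -> x (nfill e (And chi (Ann (And (conjG G psi) chi) f)))) ->
     x (nfill e (GAnn G chi f))) /\
  (forall e G f,
     (forall psi, elFam G psi -> x (nfill e (DGAnn (~: G) (conjG G psi) f))) ->
     x (nfill e (CoalAnn G f))).

Definition consistent (x : form -> Prop) : Prop := ~ x Bot.
Definition maximal (x : form -> Prop) : Prop := forall f, x f \/ x (Neg f).
Definition mct (x : form -> Prop) : Prop := theory x /\ consistent x /\ maximal x.

Definition WC : Type := {x : form -> Prop | mct x}.

Definition canon : model :=
  @Model WC
    (fun a (x y : WC) => forall f, proj1_sig x (Kn a f) <-> proj1_sig y (Kn a f))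
    (fun p (x : WC) => proj1_sig x (Var p)).

End CoRGAL.

(* Main.v *)
Require Import Defs.
From mathcomp Require Import all_boot zify.
From Stdlib Require Import Classical ClassicalEpsilon FunctionalExtensionality PropExtensionality.
Set Implicit Arguments. Unset Strict Implicit. Unset Printing Implicit Defensive.

Section Proof.
Variables (A : finType) (P : countType) (p0 : P).
Local Notation form := (form A P).
Local Notation Top := (Top A p0).
Local Notation Bot := (Bot A p0).
Local Notation CoRGAL := (CoRGAL p0).
Local Notation theory := (theory p0).
Local Notation mct := (mct p0).
Local Notation conjG := (conjG p0).

Ltac taut := let v := fresh "v" in move=> v /=;
  repeat match goal with |- context [pval v ?f] => case: (pval v f) end;
  repeat match goal with |- context [v ?f] => case: (v f) end; done.

Section Th.
Variable t : form -> Prop.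
Hypothesis Ht : theory t.
Lemma th_thm f : CoRGAL f -> t f. Proof. by case: Ht => H _; apply: H. Qed.
Lemma th_mp f g : t (Imp f g) -> t f -> t g.
Proof. by case: Ht => _ [H _]; apply: H. Qed.
Lemma th_taut1 f g : ptaut (Imp f g) -> t f -> t g.
Proof. by move=> H; apply: th_mp; apply: th_thm; apply: A0. Qed.
Lemma th_taut2 f g h : ptaut (Imp f (Imp g h)) -> t f -> t g -> t h.
Proof. by move=> H Hf Hg; apply: (th_mp _ Hg); apply: (th_taut1 H). Qed.
Lemma th_R5 e G chi f :
  (forall psi, elFam G psi -> t (nfill e (And chi (Ann (And (conjG G psi) chi) f)))) ->
  t (nfill e (GAnn G chi f)).
Proof. by case: Ht => _ [_ [H _]]; apply: H. Qed.
Lemma th_R6 e G f :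
  (forall psi, elFam G psi -> t (nfill e (DGAnn (~: G) (conjG G psi) f))) ->
  t (nfill e (CoalAnn G f)).
Proof. by case: Ht => _ [_ [_ H]]; apply: H. Qed.
End Th.

Definition ext (t : form -> Prop) g : form -> Prop := fun h => t (Imp g h).
Definition box a (t : form -> Prop) : form -> Prop := fun h => t (Kn a h).

Lemma ext_theory t g : theory t -> theory (ext t g).
Proof.
move=> Ht; split; [|split; [|split]].
- move=> f Hf; apply: (th_taut1 Ht (f:=f)); [taut| exact: th_thm].
- move=> f h H1 H2; apply: (th_taut2 Ht _ H1 H2); taut.
- move=> e G chi f H; exact: (th_R5 Ht (e:=NImp g e) H).
- move=> e G f H; exact: (th_R6 Ht (e:=NImp g e) H).
Qed.

Lemma ext_sub t g h : theory t -> t h -> ext t g h.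
Proof. move=> Ht; apply: th_taut1 => //; taut. Qed.
Lemma ext_in t g : theory t -> ext t g g.
Proof. move=> Ht; apply: (th_thm Ht); apply: A0; taut. Qed.

Lemma box_theory t a : theory t -> theory (box a t).
Proof.
move=> Ht; split; [|split; [|split]].
- by move=> f Hf; apply: (th_thm Ht); apply: R1.
- move=> f h H1 H2; apply: (th_mp Ht _ H2); apply: (th_mp Ht _ H1); apply: (th_thm Ht); apply: A1.
- move=> e G chi f H; exact: (th_R5 Ht (e:=NK a e) H).
- move=> e G f H; exact: (th_R6 Ht (e:=NK a e) H).
Qed.

Section MCT.
Variable x : form -> Prop.
Hypothesis Hx : mct x.
Let Ht : theory x := proj1 Hx.
Lemma mct_neg f : x (Neg f) <-> ~ x f.
Proof.
case: Hx => _ [Hc Hm]; split.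
- move=> H1 H2; apply: Hc; apply: (th_taut2 Ht _ H2 H1); taut.
- by case: (Hm f).
Qed.
Lemma mct_and f g : x (And f g) <-> x f /\ x g.
Proof.
split.
- move=> H; split; apply: (th_taut1 Ht _ H); taut.
- case=> H1 H2; apply: (th_taut2 Ht _ H1 H2); taut.
Qed.
Lemma mct_imp f g : x (Imp f g) <-> (x f -> x g).
Proof.
rewrite /Imp mct_neg mct_and mct_neg; split.
- move=> H Hf; apply: NNPP => Hg; exact: H.
- by move=> H [Hf Hg]; apply: Hg; apply: H.
Qed.
Lemma mct_iff f g : CoRGAL (Iff f g) -> (x f <-> x g).
Proof.
move=> H; have := th_thm Ht H; rewrite /Iff mct_and !mct_imp; tauto.
Qed.
End MCT.


Local Notation T0 := (P + (A + {set A}))%type.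
Fixpoint enc (f : form) : GenTree.tree T0 :=
  match f with
  | Var p => GenTree.Leaf (inl p)
  | Neg g => GenTree.Node 0 [:: enc g]
  | And g h => GenTree.Node 1 [:: enc g; enc h]
  | Kn a g => GenTree.Node 2 [:: GenTree.Leaf (inr (inl a)); enc g]
  | Ann g h => GenTree.Node 3 [:: enc g; enc h]
  | GAnn G c g => GenTree.Node 4 [:: GenTree.Leaf (inr (inr G)); enc c; enc g]
  | CoalAnn G g => GenTree.Node 5 [:: GenTree.Leaf (inr (inr G)); enc g]
  end.
Fixpoint dec (t : GenTree.tree T0) : option form :=
  match t with
  | GenTree.Leaf (inl p) => Some (Var A p)
  | GenTree.Node 0 [:: t1] => omap (@Neg A P) (dec t1)
  | GenTree.Node 1 [:: t1; t2] =>
      match dec t1, dec t2 with Some a, Some b => Some (And a b) | _, _ => None end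
  | GenTree.Node 2 [:: GenTree.Leaf (inr (inl a)); t1] => omap (Kn a) (dec t1)
  | GenTree.Node 3 [:: t1; t2] =>
      match dec t1, dec t2 with Some a, Some b => Some (Ann a b) | _, _ => None end
  | GenTree.Node 4 [:: GenTree.Leaf (inr (inr G)); t1; t2] =>
      match dec t1, dec t2 with Some a, Some b => Some (GAnn G a b) | _, _ => None end
  | GenTree.Node 5 [:: GenTree.Leaf (inr (inr G)); t1] => omap (CoalAnn G) (dec t1)
  | _ => None
  end.
Lemma encK : pcancel enc dec.
Proof. by elim=> //= [g -> | g -> h -> | a g -> | g -> h -> | G c -> g -> | G g ->]. Qed.
Definition code (f : form) : nat := pickle (enc f).
Definition enumf (n : nat) : form := odflt Top (obind dec (unpickle n)).
Lemma enumK f : enumf (code f) = f.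
Proof. by rewrite /enumf /code pickleK /= encK. Qed.

Lemma nfill_GG (e1 e2 : nform A P) G1 G2 c1 c2 g1 g2 :
  nfill e1 (GAnn G1 c1 g1) = nfill e2 (GAnn G2 c2 g2) ->
  [/\ e1 = e2, G1 = G2, c1 = c2 & g1 = g2].
Proof.
elim: e1 e2 => [|g e IH|a e IH|g e IH] [|g' e'|a' e'|g' e'] //=; rewrite /Imp //.
- by case=> -> -> ->.
- by case=> -> /IH [-> -> -> ->].
- by case=> -> /IH [-> -> -> ->].
- by case=> -> /IH [-> -> -> ->].
Qed.
Lemma nfill_CC (e1 e2 : nform A P) G1 G2 g1 g2 :
  nfill e1 (CoalAnn G1 g1) = nfill e2 (CoalAnn G2 g2) ->
  [/\ e1 = e2, G1 = G2 & g1 = g2].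
Proof.
elim: e1 e2 => [|g e IH|a e IH|g e IH] [|g' e'|a' e'|g' e'] //=; rewrite /Imp //.
- by case=> -> ->.
- by case=> -> /IH [-> -> ->].
- by case=> -> /IH [-> -> ->].
- by case=> -> /IH [-> -> ->].
Qed.
Lemma nfill_GC (e1 e2 : nform A P) G1 G2 c1 g1 g2 :
  nfill e1 (GAnn G1 c1 g1) <> nfill e2 (CoalAnn G2 g2).
Proof.
elim: e1 e2 => [|g e IH|a e IH|g e IH] [|g' e'|a' e'|g' e'] //=; rewrite /Imp //.
- by case=> _ /IH.
- by case=> _ /IH.
- by case=> _ /IH.
Qed.

Definition good (t : form -> Prop) := theory t /\ consistent p0 t.

Lemma good_nc t f : good t -> t f -> t (Neg f) -> False.
Proof. case=> Ht Hc H1 H2; apply: Hc; apply: (th_taut2 Ht _ H1 H2); taut. Qed.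

Lemma ext_good t f : good t -> consistent p0 (ext t f) -> good (ext t f).
Proof. by case=> Ht _ Hc; split=> //; apply: ext_theory. Qed.

Lemma ext_cons_or t f : good t -> consistent p0 (ext t f) \/ consistent p0 (ext t (Neg f)).
Proof.
case=> Ht Hc; apply: NNPP => /not_or_and [/NNPP H1 /NNPP H2].
apply: Hc; apply: (th_taut2 Ht _ H1 H2); taut.
Qed.

Lemma witness_G t e G c g : good t -> t (Neg (nfill e (GAnn G c g))) ->
  exists psi, elFam G psi /\
    consistent p0 (ext t (Neg (nfill e (And c (Ann (And (conjG G psi) c) g))))).
Proof.
move=> Hg Hn; apply: NNPP => H; apply: (good_nc Hg _ Hn).
apply: (th_R5 (proj1 Hg)) => psi Hpsi; apply: NNPP => Hno; apply: H.
exists psi; split=> // Hb; apply: Hno; apply: (th_taut1 (proj1 Hg) _ Hb); taut.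
Qed.

Lemma witness_C t e G g : good t -> t (Neg (nfill e (CoalAnn G g))) ->
  exists psi, elFam G psi /\
    consistent p0 (ext t (Neg (nfill e (DGAnn (~: G) (conjG G psi) g)))).
Proof.
move=> Hg Hn; apply: NNPP => H; apply: (good_nc Hg _ Hn).
apply: (th_R6 (proj1 Hg)) => psi Hpsi; apply: NNPP => Hno; apply: H.
exists psi; split=> // Hb; apply: Hno; apply: (th_taut1 (proj1 Hg) _ Hb); taut.
Qed.

Definition witG (t : form -> Prop) f := forall e G c g, f = nfill e (GAnn G c g) ->
  t (Neg f) -> exists psi, elFam G psi /\ t (Neg (nfill e (And c (Ann (And (conjG G psi) c) g)))).
Definition witC (t : form -> Prop) f := forall e G g, f = nfill e (CoalAnn G g) ->
  t (Neg f) -> exists psi, elFam G psi /\ t (Neg (nfill e (DGAnn (~: G) (conjG G psi) g))).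

Definition stepP (t t' : form -> Prop) f :=
  good t' /\ (forall h, t h -> t' h) /\ (t' f \/ t' (Neg f)) /\ witG t' f /\ witC t' f.

Lemma step_ex t f : good t -> exists t', stepP t t' f.
Proof.
move=> Hg; have Ht := proj1 Hg.
case: (classic (consistent p0 (ext t f))) => Hc.
  have Hg' := ext_good Hg Hc.
  exists (ext t f); split=> //; split; first by move=> h; apply: ext_sub.
  have Hf : ext t f f by apply: ext_in.
  split; first by left.
  by split=> [e G c g _ Hn|e G g _ Hn]; exfalso; apply: (good_nc Hg' Hf Hn).
have Hc1 : consistent p0 (ext t (Neg f)) by case: (ext_cons_or f Hg).
have Hg1 := ext_good Hg Hc1.
have Hn1 : ext t (Neg f) (Neg f) by apply: ext_in.
have Hs1 : forall h, t h -> ext t (Neg f) h by move=> h; apply: ext_sub.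
case: (classic (exists e G c g, f = nfill e (GAnn G c g))) => [[e [G [c [g Hf]]]]|HnG].
  have Hn1' : ext t (Neg f) (Neg (nfill e (GAnn G c g))) by rewrite -Hf.
  have [psi [Hpsi Hc2]] := witness_G Hg1 Hn1'.
  have Hg2 := ext_good Hg1 Hc2.
  exists (ext (ext t (Neg f)) (Neg (nfill e (And c (Ann (And (conjG G psi) c) g))))).
  split=> //; split; first by move=> h /Hs1; apply: ext_sub; case: Hg1.
  split; first by right; apply: ext_sub => //; case: Hg1.
  split.
    move=> e' G' c' g' /esym; rewrite Hf => /nfill_GG [-> -> -> ->] _.
    by exists psi; split=> //; rewrite -Hf; apply: (ext_in _ (proj1 Hg1)).
  by move=> e' G' g' /esym; rewrite Hf => /esym /nfill_GC.
case: (classic (exists e G g, f = nfill e (CoalAnn G g))) => [[e [G [g Hf]]]|HnC].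
  have Hn1' : ext t (Neg f) (Neg (nfill e (CoalAnn G g))) by rewrite -Hf.
  have [psi [Hpsi Hc2]] := witness_C Hg1 Hn1'.
  have Hg2 := ext_good Hg1 Hc2.
  exists (ext (ext t (Neg f)) (Neg (nfill e (DGAnn (~: G) (conjG G psi) g)))).
  split=> //; split; first by move=> h /Hs1; apply: ext_sub; case: Hg1.
  split; first by right; apply: ext_sub => //; case: Hg1.
  split.
    by move=> e' G' c' g' /esym; rewrite Hf => /nfill_GC.
  move=> e' G' g' /esym; rewrite Hf => /nfill_CC [-> -> ->] _.
  by exists psi; split=> //; rewrite -Hf; apply: (ext_in _ (proj1 Hg1)).
exists (ext t (Neg f)); split=> //; split=> //; split; first by right.
split.
  by move=> e G c g Hf; exfalso; apply: HnG; exists e, G, c, g.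
by move=> e G g Hf; exfalso; apply: HnC; exists e, G, g.
Qed.

Section Chain.
Variable t0 : form -> Prop.
Hypothesis Ht0 : good t0.

Definition stepf (n : nat) (s : {t | good t}) : {t | good t} :=
  let H := step_ex (enumf n) (proj2_sig s) in
  exist _ (proj1_sig (constructive_indefinite_description _ H))
          (proj1 (proj2_sig (constructive_indefinite_description _ H))).

Fixpoint chain n : {t | good t} :=
  match n with 0 => exist _ t0 Ht0 | S m => stepf m (chain m) end.

Definition ch n := proj1_sig (chain n).

Lemma ch_good n : good (ch n). Proof. exact: proj2_sig (chain n). Qed.

Lemma ch_step n : stepP (ch n) (ch n.+1) (enumf n).
Proof.
rewrite /ch /= /stepf /=.
by case: (constructive_indefinite_description _ _) => t' H.
Qed.

Lemma ch_mono n m : n <= m -> forall h, ch n h -> ch m h.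
Proof.
elim: m => [|m IH]; first by rewrite leqn0 => /eqP ->.
rewrite leq_eqVlt => /orP [/eqP -> //|]; rewrite ltnS => /IH H h /H.
by case: (ch_step m) => _ [Hs _]; apply: Hs.
Qed.

Definition lim h := exists n, ch n h.

Lemma lim_two h k : lim h -> lim k -> exists n, ch n h /\ ch n k.
Proof.
move=> [n Hn] [m Hm]; exists (maxn n m); split.
- by apply: (ch_mono (leq_maxl n m)).
- by apply: (ch_mono (leq_maxr n m)).
Qed.

Lemma lim_nc h : lim h -> lim (Neg h) -> False.
Proof. move=> H1 H2; case: (lim_two H1 H2) => n [Ha Hb]; exact: (good_nc (ch_good n) Ha Hb). Qed.

Lemma lim_mct : mct lim.
Proof.
split; [split; [|split; [|split]]|split].
- by move=> f Hf; exists 0; apply: (th_thm (proj1 (ch_good 0))).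
- move=> f g H1 H2; case: (lim_two H1 H2) => n [Ha Hb]; exists n.
  exact: (th_mp (proj1 (ch_good n)) Ha Hb).
- move=> e G c g H; set F := nfill e (GAnn G c g).
  case: (ch_step (code F)) => _ [_ [Hor [HG _]]]; rewrite enumK in Hor HG.
  case: Hor => [Hin|Hneg]; first by exists (code F).+1.
  case: (HG e G c g erefl Hneg) => psi [Hpsi Hn]; exfalso.
  by apply: (lim_nc (H psi Hpsi)); exists (code F).+1.
- move=> e G g H; set F := nfill e (CoalAnn G g).
  case: (ch_step (code F)) => _ [_ [Hor [_ HC]]]; rewrite enumK in Hor HC.
  case: Hor => [Hin|Hneg]; first by exists (code F).+1.
  case: (HC e G g erefl Hneg) => psi [Hpsi Hn]; exfalso.
  by apply: (lim_nc (H psi Hpsi)); exists (code F).+1.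
- by move=> [n Hn]; apply: (proj2 (ch_good n)).
- move=> f; case: (ch_step (code f)) => _ [_ [Hor _]]; rewrite enumK in Hor.
  by case: Hor => H; [left|right]; exists (code f).+1.
Qed.

Lemma lim_sub h : t0 h -> lim h.
Proof. by move=> H; exists 0. Qed.
End Chain.

Lemma lindenbaum t : good t -> exists y, mct y /\ forall h, t h -> y h.
Proof. move=> Hg; exists (lim Hg); split; [apply: lim_mct | apply: lim_sub]. Qed.


Lemma exist_K (x : form -> Prop) a f : mct x -> ~ x (Kn a f) ->
  exists y, mct y /\ (forall h, x (Kn a h) <-> y (Kn a h)) /\ ~ y f.
Proof.
move=> Hx Hnk; have Ht := proj1 Hx.
have Hbt := box_theory a Ht.
have Hg : good (ext (box a x) (Neg f)).
  split; first exact: ext_theory.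
  move=> Hb; apply: Hnk; apply: (th_mp Ht _ Hb); apply: (th_mp Ht); first by apply: (th_thm Ht); apply: A1.
  apply: (th_thm Ht); apply: R1; apply: A0; taut.
case: (lindenbaum Hg) => y [Hy Hsub]; exists y; split=> //; split.
- move=> h; split=> H.
    apply: Hsub; apply: ext_sub => //; rewrite /box.
    by apply: (th_mp Ht _ H); apply: (th_thm Ht); apply: A3.
  apply: NNPP => Hn; have /(mct_neg Hx) Hn' := Hn.
  have : x (Kn a (Neg (Kn a h))) by apply: (th_mp Ht _ Hn'); apply: (th_thm Ht); apply: A4.
  move=> Hk; have : y (Neg (Kn a h)) by apply: Hsub; apply: ext_sub.
  by move/(mct_neg Hy).
- have : y (Neg f) by apply: Hsub; apply: ext_in.
  by move/(mct_neg Hy).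
Qed.

Lemma Top_el : is_el Top. Proof. by []. Qed.
Lemma bigAnd_el s : all (@is_el A P) s -> is_el (bigAnd p0 s).
Proof.
elim: s => [|x s IH] //=; case: s IH => [|y s] IH /andP [Hx H] //=.
by rewrite Hx IH.
Qed.
Lemma conjG_el G (psi : A -> form) : elFam G psi -> is_el (conjG G psi).
Proof.
move=> H; apply: bigAnd_el; rewrite all_map; apply/allP => i /=.
by rewrite mem_enum => /H.
Qed.
Definition psi0 : A -> form := fun _ => Top.
Lemma psi0_el G : elFam G psi0. Proof. by []. Qed.

Section Sem.
Variable M : model A P.
Local Notation sat := (@sat A P p0 M).

Lemma satEL_eq D v X : is_el X -> satEL D v X = sat D v X.
Proof. by move=> H; apply: propositional_extensionality; apply: satEL_sat. Qed.

Lemma SA5 D w f p : sat D w (Ann f (Var A p)) <-> sat D w (Imp f (Var A p)).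
Proof. rewrite /Imp /=; split; [tauto| move=> H Hf; apply: NNPP => Hv; tauto]. Qed.
Lemma SA6 D w f g : sat D w (Ann f (Neg g)) <-> sat D w (Imp f (Neg (Ann f g))).
Proof. rewrite /Imp /=; tauto. Qed.
Lemma SA7 D w f g h : sat D w (Ann f (And g h)) <-> sat D w (And (Ann f g) (Ann f h)).
Proof. rewrite /=; tauto. Qed.
Lemma SA8 D w f a g : sat D w (Ann f (Kn a g)) <-> sat D w (Imp f (Kn a (Ann f g))).
Proof.
rewrite /Imp /=; split.
- move=> H [Hf Hn]; apply: Hn => v Dv R Hfv; exact: H.
- move=> H Hf v [Dv Hfv] R; apply: NNPP => Hn; apply: H; split=> // K.
  by apply: Hn; apply: K.
Qed.
Lemma SA9 D w f g h : sat D w (Ann f (Ann g h)) <-> sat D w (Ann (And f (Ann f g)) h).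
Proof.
rewrite /=.
have -> : (fun v => (fun v0 => D v0 /\ sat D v0 f) v /\ sat (fun v0 => D v0 /\ sat D v0 f) v g) =
          (fun v => D v /\ (sat D v f /\ (sat D v f -> sat (fun v0 => D v0 /\ sat D v0 f) v g))).
  apply: functional_extensionality => v; apply: propositional_extensionality; tauto.
tauto.
Qed.

Lemma SG D w G c g : sat D w (GAnn G c g) <->
  forall psi, elFam G psi -> sat D w (And c (Ann (And (conjG G psi) c) g)).
Proof.
rewrite /=; split.
- move=> [Hc H] psi Hpsi; split=> // -[HX _].
  have E : (fun v => D v /\ (sat D v (conjG G psi) /\ sat D v c)) =
           (fun v => D v /\ (satEL D v (conjG G psi) /\ sat D v c)).
    by apply: functional_extensionality => v; rewrite satEL_eq //; exact: (conjG_el Hpsi).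
  rewrite E; apply: (H psi Hpsi); split=> //; rewrite satEL_eq //; exact: (conjG_el Hpsi).
- move=> H; split; first by case: (H psi0 (@psi0_el G)).
  move=> psi Hpsi [HX Hc].
  have E : (fun v => D v /\ (satEL D v (conjG G psi) /\ sat D v c)) =
           (fun v => D v /\ (sat D v (conjG G psi) /\ sat D v c)).
    by apply: functional_extensionality => v; rewrite satEL_eq //; exact: (conjG_el Hpsi).
  rewrite E; case: (H psi Hpsi) => _; apply; split=> //.
  by rewrite -satEL_eq //; exact: (conjG_el Hpsi).
Qed.

Lemma SC D w G g : sat D w (CoalAnn G g) <->
  forall psi, elFam G psi -> sat D w (DGAnn (~: G) (conjG G psi) g).
Proof.
rewrite /DGAnn /=; split.
- move=> H psi Hpsi [HX Hall]; case: (H psi Hpsi) => chi [Hchi K].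
  have HX' : satEL D w (conjG G psi) by rewrite satEL_eq //; exact: (conjG_el Hpsi).
  case: (K HX') => [[_ Hc] Hg]; apply: (Hall chi Hchi) => //.
  have E : (fun v => D v /\ (satEL D v (conjG (~: G) chi) /\ sat D v (conjG G psi))) =
           (fun v => D v /\ (satEL D v (conjG G psi) /\ satEL D v (conjG (~: G) chi))).
    apply: functional_extensionality => v; rewrite (satEL_eq _ _ (conjG_el Hpsi)).
    apply: propositional_extensionality; tauto.
  by rewrite E.
- move=> H psi Hpsi; have := H psi Hpsi.
  case: (classic (satEL D w (conjG G psi))) => HX; last first.
    by move=> _; exists psi0; split; [apply: psi0_el | move/HX].
  have HX' : sat D w (conjG G psi) by rewrite -satEL_eq //; exact: (conjG_el Hpsi).
  move=> Hn; apply: NNPP => Hne; apply: Hn; split=> // chi Hchi [Hc _] Hg.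
  apply: Hne; exists chi; split=> // _; split=> //.
  have E : (fun v => D v /\ (satEL D v (conjG (~: G) chi) /\ sat D v (conjG G psi))) =
           (fun v => D v /\ (satEL D v (conjG G psi) /\ satEL D v (conjG (~: G) chi))).
    apply: functional_extensionality => v; rewrite (satEL_eq _ _ (conjG_el Hpsi)).
    apply: propositional_extensionality; tauto.
  by rewrite -E.
Qed.
End Sem.

Fixpoint dd (f : form) : nat :=
  match f with
  | Var _ => 0 | Neg g => dd g | And g h => maxn (dd g) (dd h) | Kn _ g => dd g
  | Ann g h => dd g + dd h | GAnn _ c g => (dd c + dd g).+1 | CoalAnn _ g => (dd g).+2
  end.
Fixpoint ss (f : form) : nat :=
  match f with
  | Var _ => 1 | Neg g => (ss g).+1 | And g h => (ss g + ss h).+1 | Kn _ g => (ss g).+1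
  | Ann g h => (5 + ss g) * ss h | GAnn _ _ _ => 1 | CoalAnn _ _ => 1
  end.
Definition lt_m (g f : form) := dd g < dd f \/ (dd g = dd f /\ ss g < ss f).

Lemma ss_pos f : 0 < ss f.
Proof. elim: f => //= g _ h Hh; rewrite muln_gt0 Hh andbT //. Qed.
Lemma dd_el f : is_el f -> dd f = 0.
Proof. elim: f => //= [g IHg h IHh /andP [/IHg -> /IHh ->] //]. Qed.

Lemma m_ind (Q : form -> Prop) : (forall f, (forall g, lt_m g f -> Q g) -> Q f) -> forall f, Q f.
Proof.
move=> H; suff K : forall n f, dd f < n -> Q f by move=> f; apply: (K (dd f).+1).
elim=> [//|n IH] f Hf.
have K : forall m g, dd g = n -> ss g < m -> Q g.
  elim=> [//|m IHm] g Hg Hs; apply: H => h [Hh|[Hh Hs']]; [apply: IH; lia| apply: IHm; lia].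
case: (ltnP (dd f) n) => [/IH //|Hn]; apply: (K (ss f).+1) => //; lia.
Qed.

Section Mono.
Variable x : form -> Prop.
Hypothesis Hx : mct x.
Let Ht := proj1 Hx.
Lemma Ann_neg f C : x f -> (x (Ann f (Neg C)) <-> ~ x (Ann f C)).
Proof.
move=> Hf; rewrite (mct_iff Hx (A6 p0 _ _)) mct_imp // mct_neg //; tauto.
Qed.
Lemma Ann_and f B C : x (Ann f (And B C)) <-> x (Ann f B) /\ x (Ann f C).
Proof. by rewrite (mct_iff Hx (A7 p0 _ _ _)) mct_and. Qed.
Lemma Ann_mono f B C : x f -> CoRGAL (Imp B C) -> x (Ann f B) -> x (Ann f C).
Proof.
move=> Hf HBC HB; have : x (Ann f (Imp B C)) by apply: (th_thm Ht); apply: R2.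
rewrite /Imp Ann_neg // Ann_and Ann_neg //.
move=> H; apply: NNPP => HC; apply: H; split=> //.
Qed.
End Mono.

Local Notation WCx := (WC A p0).
Local Notation csat := (@sat A P p0 (canon A p0) (fun _ => True)).

Definition TL (f : form) := forall x : WCx, proj1_sig x f <-> csat x f.

Lemma truth f : TL f.
Proof.
elim/m_ind: f => f IH x; have Hx : mct (proj1_sig x) := proj2_sig x.
have Ht := proj1 Hx.
case: f IH => [p|g|g h|a g|f B|G c g|G g] IH.
- by [].
- rewrite mct_neg // (IH g) //; right; rewrite /=; split=> //; lia.
- rewrite mct_and // (IH g) ?(IH h) //; rewrite /lt_m /=; have := ss_pos g; have := ss_pos h; lia.
- rewrite /=; split.
  + move=> H v _ R; rewrite -(IH g) //; last by right; rewrite /=; split=> //; lia.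
    move/R: H => H; apply: (th_mp (proj1 (proj2_sig v)) _ H).
    by apply: (th_thm (proj1 (proj2_sig v))); apply: A2.
  + move=> H; apply: NNPP => Hn.
    case: (exist_K Hx Hn) => y [Hy [R Hyg]].
    apply: Hyg; have := H (exist _ y Hy) I R.
    by rewrite -(IH g) //; right; rewrite /=; split=> //; lia.
- have IHf : TL f.
    apply: IH; rewrite /lt_m /=; have := ss_pos f; have := ss_pos B; nia.
  case: B IH => [p|g|g h|a g|g h|G c g|G g] IH.
  + rewrite (mct_iff Hx (A5 p0 _ _)) (IH (Imp f (Var A p))) ?SA5 //.
    rewrite /lt_m /=; have := ss_pos f; lia.
  + rewrite (mct_iff Hx (A6 p0 _ _)) (IH (Imp f (Neg (Ann f g)))) ?SA6 //.
    rewrite /lt_m /=; have := ss_pos f; have := ss_pos g; nia.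
  + rewrite (mct_iff Hx (A7 p0 _ _ _)) (IH (And (Ann f g) (Ann f h))) ?SA7 //.
    rewrite /lt_m /=; have := ss_pos f; have := ss_pos g; have := ss_pos h; nia.
  + rewrite (mct_iff Hx (A8 p0 _ _ _)) (IH (Imp f (Kn a (Ann f g)))) ?SA8 //.
    rewrite /lt_m /=; have := ss_pos f; have := ss_pos g; nia.
  + rewrite (mct_iff Hx (A9 p0 _ _ _)) (IH (Ann (And f (Ann f g)) h)) ?SA9 //.
    rewrite /lt_m /=; right; split; first lia.
    have := ss_pos f; have := ss_pos g; have := ss_pos h => Hh Hg Hf.
    have K : 5 + (ss f + (5 + ss f) * ss g).+1 < (5 + ss f) * (5 + ss g) by nia.
    rewrite mulnA ltn_pmul2r //.
  + have IHa : forall psi, elFam G psi -> TL (Ann f (And c (Ann (And (conjG G psi) c) g))).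
      move=> psi Hpsi; apply: IH; left; rewrite /= (dd_el (conjG_el Hpsi)); lia.
    have -> : csat x (Ann f (GAnn G c g)) <->
              forall psi, elFam G psi -> csat x (Ann f (And c (Ann (And (conjG G psi) c) g))).
      rewrite /=; split.
      * by move=> H psi Hpsi Hf; exact: (proj1 (SG _ _ _ _ _) (H Hf) psi Hpsi).
      * by move=> H Hf; apply/SG => psi Hpsi; apply: H.
    split.
    * move=> H psi Hpsi; apply/(IHa psi Hpsi x).
      case: (classic (proj1_sig x f)) => Hf.
        by apply: (Ann_mono Hx Hf _ H); apply: A10.
      by apply/(IHa psi Hpsi x) => /= /IHf.
    * move=> H; apply: (th_R5 Ht (e := NAnn f (NHole A P))) => psi Hpsi /=.
      by apply/(IHa psi Hpsi x); apply: H.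
  + have IHa : forall psi, elFam G psi -> TL (Ann f (DGAnn (~: G) (conjG G psi) g)).
      move=> psi Hpsi; apply: IH; left; rewrite /= (dd_el (conjG_el Hpsi)); lia.
    have -> : csat x (Ann f (CoalAnn G g)) <->
              forall psi, elFam G psi -> csat x (Ann f (DGAnn (~: G) (conjG G psi) g)).
      rewrite /=; split.
      * by move=> H psi Hpsi Hf; exact: (proj1 (SC _ _ _ _) (H Hf) psi Hpsi).
      * by move=> H Hf; apply/SC => psi Hpsi; apply: H.
    split.
    * move=> H psi Hpsi; apply/(IHa psi Hpsi x).
      case: (classic (proj1_sig x f)) => Hf.
        by apply: (Ann_mono Hx Hf _ H); apply: A11.
      by apply/(IHa psi Hpsi x) => /= /IHf.
    * move=> H; apply: (th_R6 Ht (e := NAnn f (NHole A P))) => psi Hpsi /=.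
      by apply/(IHa psi Hpsi x); apply: H.
- have IHa : forall psi, elFam G psi -> TL (And c (Ann (And (conjG G psi) c) g)).
    move=> psi Hpsi; apply: IH; left; rewrite /= (dd_el (conjG_el Hpsi)); lia.
  rewrite SG; split.
  + move=> H psi Hpsi; apply/(IHa psi Hpsi x).
    by apply: (th_mp Ht _ H); apply: (th_thm Ht); apply: A10.
  + move=> H; apply: (th_R5 Ht (e := NHole A P)) => psi Hpsi /=.
    by apply/(IHa psi Hpsi x); apply: H.
- have IHa : forall psi, elFam G psi -> TL (DGAnn (~: G) (conjG G psi) g).
    move=> psi Hpsi; apply: IH; left; rewrite /= (dd_el (conjG_el Hpsi)); lia.
  rewrite SC; split.
  + move=> H psi Hpsi; apply/(IHa psi Hpsi x).
    by apply: (th_mp Ht _ H); apply: (th_thm Ht); apply: A11.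
  + move=> H; apply: (th_R6 Ht (e := NHole A P)) => psi Hpsi /=.
    by apply/(IHa psi Hpsi x); apply: H.
Qed.

End Proof.

Theorem mainTheorem14 (A : finType) (P : countType) (p0 : P)
    (phi : form A P) (x : @WC A P p0) :
  proj1_sig x phi <-> @models A P p0 (@canon A P p0) x phi.
Proof. exact: (@truth A P p0 phi x). Qed.
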